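(* Let $W_{4,n}$ be the $4$-regular Kn\''odel graph. If $n\in\{16,18,28,36\}$, then $W_{4,n}$ is $\gamma$-stable.
   Context: For an even integer $n\ge 2$ and $1\le\Delta\le\lfloor\log_2 n\rfloor$, the Kn\''odel graph $W_{\Delta,n}$ is the $\Delta$-regular bipartite graph on the $n$ vertices $(i,j)$, $i\in\{1,2\}$, $0\le j\le n/2-1$, in which for every $j$ the vertex $(1,j)$ is adjacent to the vertices $(2,(j+2^k-1)\bmod (n/2))$ for $k=0,1,\dots,\Delta-1$ (and there are no other edges). A set $D$ of vertices of a graph $G$ is dominating if every vertex not in $D$ is adjacent to a vertex of $D$; $\gamma(G)$ is the minimum size of a dominating set. A graph $G$ is $\gamma$-stable if $\gamma(G-u)=\gamma(G)$ for every vertex $u$ of $G$, where $G-u$ is the graph obtained by deleting $u$. *)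

(* Defs.v *)
From mathcomp Require Import all_boot.
Set Implicit Arguments. Unset Strict Implicit. Unset Printing Implicit Defensive.

(* Simple graphs: a finite vertex type T with an adjacency relation e.
   A subgraph induced on a vertex set S is handled by passing S. *)

Definition dominating (T : finType) (e : rel T) (S D : {set T}) : bool :=
  (D \subset S) && [forall v in S, (v \notin D) ==> [exists w in D, e v w]].

(* Domination number of the subgraph induced on S (S itself always dominates). *)
Definition gamma (T : finType) (e : rel T) (S : {set T}) : nat :=
  #|[arg min_(D < S | dominating e S D) #|D|]|.

Definition gamma_stable (T : finType) (e : rel T) : Prop :=
  forall u : T, gamma e ([set: T] :\ u) = gamma e [set: T].

(* Knodel graph W_{Delta,n}: vertices (i,j), i in {1,2} encoded as 'I_2 = {0,1},
   0 <= j <= n/2 - 1.  (1,j) ~ (2, (j + 2^k - 1) mod (n/2)) for k < Delta. *)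
Definition knodel_vertex (n : nat) := ('I_2 * 'I_(n./2))%type.

Definition knodel_arc (Delta n : nat) (x y : knodel_vertex n) : bool :=
  [&& nat_of_ord x.1 == 0, nat_of_ord y.1 == 1 &
      [exists k : 'I_Delta, nat_of_ord y.2 == (x.2 + 2 ^ k - 1) %% n./2]].

Definition knodel_adj (Delta n : nat) : rel (knodel_vertex n) :=
  fun x y => knodel_arc Delta x y || knodel_arc Delta y x.

(* Main.v *)
Require Import Defs.
From mathcomp Require Import all_boot.
Set Implicit Arguments. Unset Strict Implicit.

Section Search.
Variables (T : finType) (e : rel T) (vs : seq T) (eqb ee : T -> T -> bool) (cb : nat).
Definition nb w x := eqb x w || ee x w.
Hypothesis Heqb : forall x y, eqb x y = (x == y).
Hypothesis Hee : forall x y, ee x y = e x y.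
Hypothesis Hvs : forall x, x \in vs.
Hypothesis Hc : forall w, count (nb w) vs <= cb.


Fixpoint pick (f : T -> option (seq T)) (c : seq T) : option (seq T) :=
  match c with
  | [::] => None
  | w :: c' => if f w is Some D then Some D else pick f c'
  end.

Fixpoint find (P : pred T) (k : nat) (U : seq T) {struct k} : option (seq T) :=
  match U with
  | [::] => Some [::]
  | v :: _ => if cb * k < size U then None else match k with
     | 0 => None
     | k'.+1 => pick (fun w => omap (cons w) (find P k' [seq x <- U | ~~ nb w x]))
                     [seq w <- vs | P w && nb w v]
     end
  end.

Lemma pick_none f c : pick f c = None -> forall w, w \in c -> f w = None.
Proof.
elim: c => [|w c IH] //= H x; rewrite inE; case/orP => [/eqP ->|].
  by move: H; case: (f w).
by apply: IH; move: H; case: (f w).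
Qed.

Lemma pick_some f c D : pick f c = Some D -> exists2 w, w \in c & f w = Some D.
Proof.
elim: c => [|w c IH] //=; case E: (f w) => [D'|].
  by case=> <-; exists w; rewrite ?inE ?eqxx.
by case/IH => x xc fx; exists x; rewrite // inE xc orbT.
Qed.

Lemma nbE w x : nb w x = (x == w) || e x w.
Proof. by rewrite /nb Heqb Hee. Qed.

Lemma size_le_sum (D : {set T}) U :
  (forall x, x \in U -> exists2 w, w \in D & nb w x) ->
  size U <= \sum_(w in D) count (nb w) U.
Proof.
elim: U => [|x U IH] H /=; first by [].
rewrite big_split /=.
rewrite -add1n; apply: leq_add.
  have [w wD nbw] := H x (mem_head _ _).
  by rewrite (bigD1 w) //= nbw.
by apply: IH => y yU; apply: H; rewrite inE yU orbT.
Qed.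

Lemma find_none P k U : subseq U vs -> find P k U = None ->
  forall D : {set T}, (forall w, w \in D -> P w) ->
  (forall x, x \in U -> exists2 w, w \in D & nb w x) -> k < #|D|.
Proof.
elim: k U => [|k IH] [|v U0] //= sU.
  move=> _ D HP HU.
  have [w wD _] := HU v (mem_head _ _).
  by apply/card_gt0P; exists w.
case: ifP => [big _ D HP HU|_ H D HP HU].
  have le1 : size (v :: U0) <= #|D| * cb.
    apply: leq_trans (size_le_sum HU) _.
    rewrite -sum_nat_const; apply: leq_sum => w _.
    by apply: leq_trans (Hc w); exact: leq_count_subseq.
  have : cb * k.+1 < cb * #|D| by apply: leq_trans big _; rewrite mulnC.
  by rewrite ltn_mul2l => /andP [_].
have [w wD nbw] := HU v (mem_head _ _).
have wc : w \in [seq w <- vs | P w && nb w v] by rewrite mem_filter HP // nbw Hvs.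
have := pick_none H wc; case E : (find _ _ _) => [D'|] //= _.
have := IH _ _ E (D :\ w).
rewrite (cardsD1 w D) wD add1n ltnS; apply.
- apply: subseq_trans sU; rewrite nbw /=; apply: subseq_trans (subseq_cons _ v); exact: filter_subseq.
- by move=> x; rewrite in_setD1 => /andP [_ /HP].
move=> x; rewrite nbw /= mem_filter => /andP [nx xU0].
have xU : x \in v :: U0 by rewrite inE xU0 orbT.
have [w' w'D nbw'] := HU x xU.
exists w' => //; rewrite in_setD1 w'D andbT.
by apply/eqP => ew; move: nx; rewrite -ew nbw'.
Qed.

Lemma find_some P k U D : find P k U = Some D ->
  [/\ all P D, size D <= k & forall x, x \in U -> exists2 w, w \in D & nb w x].
Proof.
elim: k U D => [|k IH] [|v U0] //= D.
- by case=> <-.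
- by case: ifP.
- by case=> <-.
case: ifP => // _.
case/pick_some => w; rewrite mem_filter => /andP [/andP [Pw nbv] _].
case E : (find _ _ _) => [D'|] //= [<-].
have [aP sD cov] := IH _ _ E.
split => //=; first by rewrite Pw.
move=> x; rewrite inE => /orP [/eqP ->|xU].
  by exists w; rewrite ?inE ?eqxx.
case nx : (nb w x); first by exists w; rewrite ?inE ?eqxx.
have [w' w'D nbw'] : exists2 w', w' \in D' & nb w' x.
  by apply: cov; rewrite nbv /= mem_filter nx.
by exists w'; rewrite // inE w'D orbT.
Qed.

Lemma gamma_find (S : {set T}) (P : pred T) g D :
  (forall x, (x \in S) = P x) ->
  find P g.+1 [seq x <- vs | P x] = Some D ->
  find P g [seq x <- vs | P x] = None ->
  gamma e S = g.+1.
Proof.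
move=> HS Hs Hn.
have [aP sD cov] := find_some Hs.
have domD : dominating e S [set x in D].
  apply/andP; split.
    by apply/subsetP => x; rewrite inE HS => /(allP aP).
  apply/forall_inP => v vS; apply/implyP; rewrite inE => vD.
  have [w wD] : exists2 w, w \in D & nb w v.
    by apply: cov; rewrite mem_filter -HS vS Hvs.
  rewrite nbE; case/orP => [/eqP ew|evw]; first by move: vD; rewrite ew wD.
  by apply/exists_inP; exists w; rewrite ?inE.
have lowb : forall D0 : {set T}, dominating e S D0 -> g < #|D0|.
  move=> D0 /andP [/subsetP sub /forall_inP dom].
  apply: (find_none (filter_subseq _ _) Hn) => [w /sub|x]; first by rewrite HS.
  rewrite mem_filter -HS => /andP [xS _].
  case xD0: (x \in D0); first by exists x; rewrite // nbE eqxx.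
  have /existsP [w /andP [wD0 exw]] := implyP (dom x xS) (negbT xD0).
  by exists w; rewrite // nbE exw orbT.
rewrite /gamma; case: arg_minnP => [|D0 domD0 minD0].
  by apply/andP; split; [exact: subxx | apply/forall_inP => v ->].
apply/eqP; rewrite eqn_leq lowb // andbT.
apply: leq_trans (minD0 _ domD) _.
rewrite (@eq_card _ _ (mem D)); last by move=> x; rewrite !inE.
exact: leq_trans (card_size D) sD.
Qed.

End Search.

Definition mkord (k i : nat) : option 'I_k :=
  match i < k as b return (i < k = b -> option 'I_k) with
  | true => fun h => Some (Ordinal h)
  | false => fun _ => None
  end erefl.

Lemma mkordP k (x : 'I_k) : mkord k x = Some x.
Proof.
case: x => i h; rewrite /mkord /=.
suff: forall b (E : (i < k) = b),
  (match b as b0 return ((i < k) = b0 -> option 'I_k) with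
   | true => fun h => Some (Ordinal h) | false => fun _ => None end E)
  = Some (Ordinal h) by apply.
case=> E; first by congr Some; apply: val_inj.
by rewrite h in E.
Qed.

Definition kvs m : seq ('I_2 * 'I_m) :=
  [seq (a, b) | a <- pmap (mkord 2) (iota 0 2), b <- pmap (mkord m) (iota 0 m)].

Lemma mkord_mem k (x : 'I_k) : x \in pmap (mkord k) (iota 0 k).
Proof. by rewrite mem_pmap -mkordP; apply: map_f; rewrite mem_iota /=. Qed.

Lemma kvsP m x : x \in kvs m.
Proof.
case: x => a b; apply/allpairsP; exists (a, b); split; [exact: (mkord_mem a) | exact: (mkord_mem b) | by []].
Qed.

Definition keqb m (x y : 'I_2 * 'I_m) := eqn (val x.1) (val y.1) && eqn (val x.2) (val y.2).

Lemma keqbP m x y : keqb x y = (x == y :> 'I_2 * 'I_m).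
Proof. by case: x y => [a b] [c d]. Qed.

Definition karc m (x y : 'I_2 * 'I_m) :=
  [&& eqn (val x.1) 0, eqn (val y.1) 1 &
      has (fun k => eqn (val y.2) ((val x.2 + 2 ^ k - 1) %% m)) (iota 0 4)].

Definition kee m (x y : 'I_2 * 'I_m) := karc x y || karc y x.

Lemma karcP n x y : karc x y = knodel_arc 4 (n := n) x y.
Proof.
rewrite /karc /knodel_arc; congr [&& _, _ & _].
apply/hasP/existsP => [[k]|[k /eqP hk]].
  by rewrite mem_iota /= => hk /eqP E; exists (Ordinal hk); apply/eqP.
by exists (val k); [rewrite mem_iota /= ltn_ord | apply/eqP].
Qed.

Lemma keeP n x y : kee x y = knodel_adj 4 (n := n) x y.
Proof. by rewrite /kee /knodel_adj !karcP. Qed.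

Definition isNone (A : Type) (o : option A) := if o is None then true else false.

Definition chk m g :=
  let vs := kvs m in
  let F P k := find vs (@keqb m) (@kee m) 5 P k [seq x <- vs | P x] in
  [&& all (fun w => count (nb (@keqb m) (@kee m) w) vs <= 5) vs, isSome (F predT g.+1), isNone (F predT g) &
    all (fun u => let P := fun x => ~~ keqb x u in isSome (F P g.+1) && isNone (F P g)) vs].

Lemma chk_stable n g : chk n./2 g -> gamma_stable (@knodel_adj 4 n).
Proof.
have Heqb := @keqbP n./2; have Hee := @keeP n; have Hvs := @kvsP n./2.
case/and4P => /allP Hc0 s0 n0 /allP H.
have Hc : forall w, count (nb (@keqb _) (@kee n./2) w) (kvs n./2) <= 5 by move=> w; apply: Hc0; apply: Hvs.
have G : forall (S : {set knodel_vertex n}) (P : pred (knodel_vertex n)),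
  (forall x, (x \in S) = P x) ->
  isSome (find (kvs n./2) (@keqb _) (@kee _) 5 P g.+1 [seq x <- kvs n./2 | P x]) ->
  isNone (find (kvs n./2) (@keqb _) (@kee _) 5 P g [seq x <- kvs n./2 | P x]) ->
  gamma (@knodel_adj 4 n) S = g.+1.
  move=> S P HS; case E1: (find _ _ _ _ _ g.+1 _) => [D|] // _; case E2: (find _ _ _ _ _ g _) => // _.
  exact: (gamma_find Heqb Hee Hvs Hc HS E1 E2).
move=> u; have /andP [su nu] := H u (Hvs u).
have g0 : gamma (@knodel_adj 4 n) [set: knodel_vertex n] = g.+1.
  by apply: (G _ predT _ s0 n0) => x; rewrite inE.
rewrite g0.
by apply: G su nu => x; rewrite in_setD1 in_setT andbT Heqb.
Qed.

Lemma c16 : chk 8 3. Proof. Time by vm_compute. Qed.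
Lemma c18 : chk 9 3. Proof. Time by vm_compute. Qed.
Lemma c28 : chk 14 6. Proof. Time by vm_compute. Qed.
Lemma c36 : chk 18 7. Proof. Time by vm_compute. Qed.

Theorem lemma4p3 (n : nat) :
  n \in [:: 16; 18; 28; 36] -> gamma_stable (@knodel_adj 4 n).
Proof.
rewrite !inE => /or4P [] /eqP -> ; apply: chk_stable.
- exact: c16.
- exact: c18.
- exact: c28.
- exact: c36.
Qed.
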